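(* There is an absolute constant $c>0$ such that, for every graph $G=(V,E)$ on $n\ge2$ vertices, with $\alpha=c/\log n$, the edge set of $G$ can be decomposed into an edge-disjoint union of subgraphs $G_1\uplus G_2\uplus\cdots\uplus G_k$ such that (a) each vertex appears in at most $O(\log^2 n)$ of the subgraphs, and (b) each subgraph $G_i$ is an $\frac{\alpha}{4}$-weakly-regular $\alpha$-expander.
   Context: For a graph $H=(U,F)$ and $S\subseteq U$, $\mathrm{vol}(S)=\sum_{v\in S}\deg_H(v)$. $H$ is an $\alpha$-expander if for every $S\subseteq U$, $|F(S,U\setminus S)|\ge\alpha\min\{\mathrm{vol}(S),\mathrm{vol}(U\setminus S)\}$. For $\gamma\in[0,1]$, $H$ is $\gamma$-weakly-regular if every vertex of $H$ has degree at least $\gamma$ times the average degree $\frac{1}{|U|}\sum_{u\in U}\deg_H(u)$. The $O(\cdot)$ hides an absolute constant. *)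

(* Defs.v *)
From mathcomp Require Import all_boot.
From Stdlib Require Import Reals.
Set Implicit Arguments. Unset Strict Implicit. Unset Printing Implicit Defensive.

(* A finite simple graph is a symmetric irreflexive relation e on a finType V.
   Edges are represented as 2-element vertex sets. A subgraph H is given by its
   edge set F : {set {set V}}; its vertex set is the set of endpoints of F. *)
Section Graphs.
Variable V : finType.

Definition edge_set (e : rel V) : {set {set V}} :=
  [set [set x; y] | x in V, y in V & e x y].

Definition sg_vertices (F : {set {set V}}) : {set V} :=
  [set v | [exists f in F, v \in f]].

Definition sg_deg (F : {set {set V}}) (v : V) : nat :=
  #|[set f in F | v \in f]|.

Definition sg_vol (F : {set {set V}}) (S : {set V}) : nat :=
  \sum_(v in S) sg_deg F v.

Definition sg_cut (F : {set {set V}}) (S : {set V}) : nat :=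
  #|[set f in F | (f :&: S != set0) && (f :\: S != set0)]|.

Definition is_expander (alpha : R) (F : {set {set V}}) : Prop :=
  let U := sg_vertices F in
  forall S : {set V}, S \subset U ->
    (INR (sg_cut F S) >= alpha * Rmin (INR (sg_vol F S)) (INR (sg_vol F (U :\: S))))%R.

Definition weakly_regular (gamma : R) (F : {set {set V}}) : Prop :=
  let U := sg_vertices F in
  forall u : V, u \in U ->
    (INR (sg_deg F u) >= gamma * (INR (sg_vol F U) / INR #|U|))%R.

End Graphs.

(* Main.v *)
Require Import Defs.
From mathcomp Require Import all_boot zify.
From Stdlib Require Import Reals Lra Lia Classical.
Set Implicit Arguments. Unset Strict Implicit. Unset Printing Implicit Defensive.

Section RA.
Local Open Scope R_scope.


Lemma INR_add (a b : nat) : INR (a + b)%nat = (INR a + INR b)%R.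
Proof. by rewrite -plus_INR. Qed.
Lemma INR_mul (a b : nat) : INR (a * b)%nat = (INR a * INR b)%R.
Proof. by rewrite -mult_INR. Qed.
Lemma INR_leq a b : (a <= b)%nat -> (INR a <= INR b)%R.
Proof. by move/leP; apply: le_INR. Qed.
Lemma INR_leq_inv a b : (INR a <= INR b)%R -> (a <= b)%nat.
Proof. by move/INR_le/leP. Qed.
Lemma INR_ge1 a : (0 < a)%nat -> 1 <= INR a.
Proof. by move=> H; have := INR_leq H. Qed.

Lemma ln_le x y : 0 < x -> x <= y -> ln x <= ln y.
Proof.
move=> Hx [Hxy|->]; last lra.
by left; apply: ln_increasing.
Qed.

Lemma ln_ge0 x : 1 <= x -> 0 <= ln x.
Proof. by move=> H; rewrite -ln_1; apply: ln_le => //; lra. Qed.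

Lemma ln_le_sub1 y : 0 < y -> ln y <= y - 1.
Proof.
move=> Hy; have H := exp_ineq1_le (y - 1).
rewrite -(ln_exp (y - 1)); apply: ln_le => //; lra.
Qed.

Lemma ln_diff u : 2 <= u -> / u <= ln u - ln (u - 1).
Proof.
move=> Hu.
have -> : u - 1 = u * ((u - 1) / u) by field; lra.
rewrite ln_mult; [|lra|apply: Rdiv_lt_0_compat; lra].
have := ln_le_sub1 (y := (u - 1) / u) ltac:(apply: Rdiv_lt_0_compat; lra).
have -> : (u - 1) / u - 1 = - / u by field; lra.
lra.
Qed.

Definition Phi (x w : nat) : R := INR x * (2 * ln (INR x) + ln (INR w)).

Lemma Phi_le x y w z : (x <= y)%nat -> (w <= z)%nat -> ((0 < x)%nat -> (0 < w)%nat) ->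
  Phi x w <= INR x * (2 * ln (INR y) + ln (INR z)).
Proof.
move=> Hxy Hwz Hxw; rewrite /Phi.
case: (posnP x) => [->|Hx0]; first by rewrite /= !Rmult_0_l; lra.
have Hw0 := Hxw Hx0.
have H1 := INR_ge1 Hx0; have H2 := INR_ge1 Hw0.
have := ln_le (x := INR x) (y := INR y) ltac:(lra) (INR_leq Hxy).
have := ln_le (x := INR w) (y := INR z) ltac:(lra) (INR_leq Hwz).
move=> A B; apply: Rmult_le_compat_l; lra.
Qed.

Lemma Phi_half x y w z : (2 * x <= y)%nat -> (w <= z)%nat -> ((0 < x)%nat -> (0 < w)%nat) ->
  Phi x w <= INR x * (2 * ln (INR y) + ln (INR z)) - INR x.
Proof.
move=> Hxy Hwz Hxw; rewrite /Phi.
case: (posnP x) => [->|Hx0]; first by rewrite /= !Rmult_0_l; lra.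
have Hw0 := Hxw Hx0.
have H1 := INR_ge1 Hx0; have H2 := INR_ge1 Hw0.
have := ln_le (x := INR (2 * x)%nat) (y := INR y) ltac:(rewrite INR_mul /=; lra) (INR_leq Hxy).
rewrite INR_mul ln_mult /=; [|lra|lra].
have := ln_le (x := INR w) (y := INR z) ltac:(lra) (INR_leq Hwz).
have := ln_lt_2.
move=> A B C.
have -> : INR x * (2 * ln (INR y) + ln (INR z)) - INR x = INR x * (2 * ln (INR y) + ln (INR z) - 1) by ring.
have E : 1 + 1 = 2 by ring.
rewrite E in C.
apply: Rmult_le_compat_l; lra.
Qed.

Lemma Phi_ge0 x w : ((0 < x)%nat -> (0 < w)%nat) -> 0 <= Phi x w.
Proof.
move=> Hxw; rewrite /Phi.
case: (posnP x) => [->|Hx0]; first by rewrite /= !Rmult_0_l; lra.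
have H1 := INR_ge1 Hx0; have H2 := INR_ge1 (Hxw Hx0).
have := ln_ge0 H1; have := ln_ge0 H2; move=> A B.
apply: Rmult_le_pos; lra.
Qed.

Definition Kp (al : R) := (1 - al) / (2 * al).

Lemma removal_real al d M Uu L a b QF' : 0 < al < 1 -> 1 <= M -> 2 <= Uu -> 0 <= d ->
  d < al / 4 * (2 * M / Uu) -> / Uu <= a - b -> QF' <= M * (2 * L + b) ->
  Kp al * d + QF' <= M * (2 * L + a).
Proof.
move=> Hal HM HU Hd Hdl Hab HQ.
have Ht : 0 < / Uu by apply: Rinv_0_lt_compat; lra.
have HK : 0 <= Kp al by rewrite /Kp; apply: Rmult_le_pos; [lra|left; apply: Rinv_0_lt_compat; lra].
have E : al / 4 * (2 * M / Uu) = al * M * / Uu / 2 by field; lra.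
rewrite E in Hdl.
have H1 : Kp al * d <= Kp al * (al * M * / Uu / 2) by apply: Rmult_le_compat_l; lra.
have E2 : Kp al * (al * M * / Uu / 2) = (1 - al) * (M * / Uu) / 4 by rewrite /Kp; field; lra.
rewrite E2 in H1.
have H2 : M * / Uu <= M * (a - b) by apply: Rmult_le_compat_l; lra.
have H3 : 0 <= M * / Uu by apply: Rmult_le_pos; lra.
have H4 : (1 - al) * (M * / Uu) <= M * / Uu.
  have : 0 <= al * (M * / Uu) by apply: Rmult_le_pos; lra.
  lra.
lra.
Qed.

Lemma cut_real al c ms mo M Lv Q1 Q2 : 0 < al < 1 -> 0 <= c -> c < al * (2 * ms + c) ->
  ms + mo <= M -> 0 <= Lv -> 0 <= ms -> 0 <= mo -> Q1 <= ms * Lv - ms -> Q2 <= mo * Lv ->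
  Kp al * c + (Q1 + Q2) <= M * Lv.
Proof.
move=> Hal Hc Hcl HM HL Hms Hmo H1 H2.
have Hk : Kp al * c <= ms.
  have Hx : c * (1 - al) <= 2 * al * ms by nra.
  have : c * (1 - al) * / (2 * al) <= 2 * al * ms * / (2 * al).
    by apply: Rmult_le_compat_r; [left; apply: Rinv_0_lt_compat; lra | lra].
  have -> : 2 * al * ms * / (2 * al) = ms by field; lra.
  by rewrite /Kp; have -> : (1 - al) / (2 * al) * c = c * (1 - al) * / (2 * al) by field; lra.
have : (ms + mo) * Lv <= M * Lv by apply: Rmult_le_compat_r.
nra.
Qed.

Lemma cut_pos al c x y : 0 < al -> INR c < al * Rmin (INR x) (INR y) -> (0 < x)%nat /\ (0 < y)%nat.
Proof.
move=> Hal Hc; have := pos_INR c => Hc0.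
have H1 := Rmin_l (INR x) (INR y); have H2 := Rmin_r (INR x) (INR y).
have H3 : al * Rmin (INR x) (INR y) <= al * INR x by apply: Rmult_le_compat_l; lra.
have H4 : al * Rmin (INR x) (INR y) <= al * INR y by apply: Rmult_le_compat_l; lra.
split; apply/negPn/negP; rewrite -leqNgt leqn0 => /eqP E; subst; rewrite !INR_0 in Hc H3 H4; lra.
Qed.

Lemma alpha_ok L : / 2 < L -> 0 < / 40 / L < 1 /\ 10 * L <= Kp (/ 40 / L).
Proof.
move=> HL.
have HL0 : 0 < L by lra.
have Ha : / 40 / L < / 20.
  apply: (Rmult_lt_reg_r (40 * L)); first lra.
  have -> : / 40 / L * (40 * L) = 1 by field; lra.
  have -> : / 20 * (40 * L) = 2 * L by field.
  lra.
have Ha0 : 0 < / 40 / L by apply: Rdiv_lt_0_compat; lra.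
split; first lra.
have -> : Kp (/ 40 / L) = (1 - / 40 / L) * (20 * L) by rewrite /Kp; field; lra.
nra.
Qed.

Lemma level_real L r m K Qv : / 2 < L -> 10 * L <= K -> K * r <= Qv ->
  Qv <= m * (2 * (L + L) + L) -> 0 <= r -> 2 * r <= m.
Proof.
move=> HL HK H1 H2 Hr.
have : 10 * L * r <= K * r by apply: Rmult_le_compat_r.
nra.
Qed.

End RA.

Section G.
Variable V : finType.
Variable e : rel V.
Hypothesis Hirr : irreflexive e.

Lemma edgeP f : f \in edge_set e -> exists x y, x != y /\ f = [set x; y].
Proof.
case/imset2P => x y _; rewrite inE => Hxy ->.
exists x, y; split => //; apply/eqP => Exy; move: Hxy; rewrite Exy Hirr.
by rewrite andbF.
Qed.

Lemma sub2 (x y : V) (A : {set V}) : ([set x; y] \subset A) = (x \in A) && (y \in A).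
Proof. by rewrite subUset !sub1set. Qed.

Lemma card_I2 (x y : V) (A : {set V}) : x != y ->
  #|[set x; y] :&: A| = (x \in A) + (y \in A).
Proof.
move=> nxy; have nyx : y != x by rewrite eq_sym.
have Hs : forall B : {set V}, (forall z, (z \in B) = ((z == x) && (x \in A)) || ((z == y) && (y \in A))) ->
   [set x; y] :&: A = B.
  move=> B HB; apply/setP => z; rewrite HB !inE.
  have [->|nzx] := eqVneq z x; first by rewrite (negbTE nxy); case: (x \in A).
  have [->|nzy] := eqVneq z y; first by case: (y \in A).
  by [].
case hx: (x \in A); case hy: (y \in A).
- rewrite (Hs [set x; y]) ?cards2 ?nxy // => z; rewrite !inE hx hy !andbT //.
- rewrite (Hs [set x]) ?cards1 // => z; rewrite !inE hx hy andbT andbF orbF //.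
- rewrite (Hs [set y]) ?cards1 // => z; rewrite !inE hx hy andbT andbF //.
- rewrite (Hs set0) ?cards0 // => z; rewrite !inE hx hy !andbF //.
Qed.



Lemma cut2 (x y : V) (A : {set V}) : x != y ->
  ([set x; y] :&: A != set0) && ([set x; y] :\: A != set0) = ((x \in A) != (y \in A)).
Proof.
move=> nxy; rewrite -!card_gt0 setDE card_I2 // card_I2 // !inE.
by case: (x \in A); case: (y \in A).
Qed.

Lemma card_setP (T : finType) (F : {set T}) (P : pred T) :
  #|[set f in F | P f]| = \sum_(f in F) (P f : nat).
Proof.
rewrite -sum1_card [LHS]big_mkcond [RHS]big_mkcond; apply: eq_bigr => f _.
by rewrite inE; case: (f \in F); case: (P f).
Qed.

Lemma vol_sum (F : {set {set V}}) (S : {set V}) : sg_vol F S = \sum_(f in F) #|f :&: S|.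
Proof.
rewrite /sg_vol /sg_deg; under eq_bigr do rewrite card_setP.
rewrite exchange_big; apply: eq_bigr => f _.
have -> : f :&: S = [set v in S | v \in f] by apply/setP => v; rewrite !inE andbC.
by rewrite card_setP.
Qed.

Lemma vertP (F : {set {set V}}) v : reflect (exists2 f, f \in F & v \in f) (v \in sg_vertices F).
Proof.
rewrite inE; apply: (iffP existsP) => [[f /andP [H1 H2]]|[f H1 H2]]; exists f => //.
by rewrite H1.
Qed.

Lemma sub_vert (F : {set {set V}}) f : f \in F -> f \subset sg_vertices F.
Proof. by move=> Hf; apply/subsetP => v Hv; apply/vertP; exists f. Qed.

Lemma vert_sub (F G : {set {set V}}) : F \subset G -> sg_vertices F \subset sg_vertices G.
Proof.
move=> /subsetP HFG; apply/subsetP => v /vertP [f Hf Hv]; apply/vertP; exists f => //.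
exact: HFG.
Qed.

Section Cl.
Variable F : {set {set V}}.
Hypothesis HF : F \subset edge_set e.
Let U := sg_vertices F.

Lemma edgeF f : f \in F -> exists x y, [/\ x != y, f = [set x; y], x \in U & y \in U].
Proof.
move=> Hf; have [x [y [nxy Ef]]] := edgeP (subsetP HF f Hf).
exists x, y; split => //; apply/vertP; exists f => //; rewrite Ef !inE eqxx ?orbT //.
Qed.

Lemma vol_U : sg_vol F U = 2 * #|F|.
Proof.
rewrite vol_sum -[#|F|]sum1_card big_distrr /=; apply: eq_bigr => f Hf.
have [x [y [nxy -> Hx Hy]]] := edgeF Hf.
by rewrite card_I2 // Hx Hy.
Qed.

Variable S : {set V}.
Let T := U :\: S.
Definition F1 := [set f in F | f \subset S].
Definition F2 := [set f in F | f \subset T].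
Definition Cu := [set f in F | (f :&: S != set0) && (f :\: S != set0)].

Lemma cut_Cu : sg_cut F S = #|Cu|. Proof. by []. Qed.

Lemma vol_S : sg_vol F S = 2 * #|F1| + #|Cu|.
Proof.
rewrite vol_sum /F1 /Cu !card_setP big_distrr -big_split /=; apply: eq_bigr => f Hf.
have [x [y [nxy -> Hx Hy]]] := edgeF Hf.
rewrite card_I2 // sub2 cut2 //.
by case: (x \in S); case: (y \in S).
Qed.

Lemma vol_T : sg_vol F T = 2 * #|F2| + #|Cu|.
Proof.
rewrite vol_sum /F2 /Cu !card_setP big_distrr -big_split /=; apply: eq_bigr => f Hf.
have [x [y [nxy -> Hx Hy]]] := edgeF Hf.
rewrite card_I2 // sub2 cut2 // /T !in_setD Hx Hy !andbT.
by case: (x \in S); case: (y \in S).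
Qed.

Lemma card_F : #|F| = #|F1| + #|F2| + #|Cu|.
Proof.
rewrite -[#|F|]sum1_card /F1 /F2 /Cu !card_setP -!big_split /=; apply: eq_bigr => f Hf.
have [x [y [nxy -> Hx Hy]]] := edgeF Hf.
rewrite !sub2 cut2 // /T !in_setD Hx Hy.
by case: (x \in S); case: (y \in S).
Qed.

Lemma F_cases f : f \in F -> [|| f \in F1, f \in F2 | f \in Cu].
Proof.
move=> Hf; have [x [y [nxy Ef Hx Hy]]] := edgeF Hf.
rewrite /F1 /F2 /Cu !inE Hf Ef !sub2 cut2 // /T !in_setD Hx Hy /=.
by case: (x \in S); case: (y \in S).
Qed.

Lemma F1_sub : F1 \subset F. Proof. by apply/subsetP => f; rewrite inE => /andP[]. Qed.
Lemma F2_sub : F2 \subset F. Proof. by apply/subsetP => f; rewrite inE => /andP[]. Qed.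
Lemma vert_F1 : sg_vertices F1 \subset S.
Proof. apply/subsetP => v /vertP [f]; rewrite inE => /andP [_ /subsetP H] /H //. Qed.
Lemma vert_F2 : sg_vertices F2 \subset T.
Proof. apply/subsetP => v /vertP [f]; rewrite inE => /andP [_ /subsetP H] /H //. Qed.
End Cl.

Definition Q (F : {set {set V}}) := Phi #|F| #|sg_vertices F|.
Definition good (al : R) (F : {set {set V}}) := weakly_regular (al / 4) F /\ is_expander al F.
Definition bigU (Ps : seq {set {set V}}) := \bigcup_(P <- Ps) P.

Lemma nonempty_vert (F : {set {set V}}) : F \subset edge_set e -> 0 < #|F| -> 1 < #|sg_vertices F|.
Proof.
move=> HF; rewrite card_gt0 => /set0Pn [f Hf].
have [x [y [nxy Ef Hx Hy]]] := edgeF HF Hf.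
have : [set x; y] \subset sg_vertices F by rewrite sub2 Hx Hy.
by move/subset_leq_card; rewrite cards2 nxy.
Qed.

Lemma Q_ge0 (F : {set {set V}}) : F \subset edge_set e -> (0 <= Q F)%R.
Proof.
move=> HF; apply: Phi_ge0 => H; have := nonempty_vert HF H.
by move/(ltn_trans _)->.
Qed.

Lemma level (al : R) : (0 < al < 1)%R -> forall F : {set {set V}}, F \subset edge_set e -> exists Ps : seq {set {set V}},
  (forall P, P \in Ps -> P \subset F /\ good al P) /\
  (forall v, count (fun P => v \in sg_vertices P) Ps <= 1) /\
  (Kp al * INR #|F :\: bigU Ps| <= Q F)%R.
Proof.
move=> Hal F; have [k] := ubnP #|F|; elim: k F => // k IH F HFk HF.
case: (classic (good al F)) => [Hg|Hng].
  exists [:: F]; split.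
    by move=> P; rewrite inE => /eqP ->; split.
  split; first by move=> v /=; case: (_ \in _).
  by rewrite /bigU big_seq1 setDv cards0 /= Rmult_0_r; apply: Q_ge0.
set U := sg_vertices F.
case: (classic (weakly_regular (al / 4) F)) => Hw; last first.
  have [u [Hu Hdeg]] : exists u, u \in U /\
      (INR (sg_deg F u) < al / 4 * (INR (sg_vol F U) / INR #|U|))%R.
    apply: NNPP => Hn; apply: Hw; rewrite /weakly_regular /= => u Hu; apply: Rnot_lt_ge => Hl; apply: Hn; by exists u.
  set D := [set f : {set V} | u \in f].
  set F' := F :\: D.
  have HF' : F' \subset edge_set e by apply: subset_trans HF; apply: subsetDl.
  have Edeg : sg_deg F u = #|F :&: D| by rewrite /sg_deg; apply: eq_card => f; rewrite !inE.
  have Hd0 : 0 < #|F :&: D|.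
    have [f Hf Huf] := vertP _ _ Hu.
    by rewrite card_gt0; apply/set0Pn; exists f; rewrite !inE Hf Huf.
  have Hcard := cardsID D F.
  have Hlt : #|F'| < #|F| by rewrite -Hcard -/F' -{1}(add0n #|F'|) ltn_add2r.
  have [Ps [H1 [H2 H3]]] := IH F' (leq_trans Hlt HFk) HF'.
  exists Ps; split.
    move=> P /H1 [HP Hg]; split => //; apply: subset_trans HP _; apply: subsetDl.
  split => //.
  have Hsub : F :\: bigU Ps \subset (F' :\: bigU Ps) :|: (F :&: D).
    apply/subsetP => f; rewrite !inE => /andP [Hn Hf].
    by case: (u \in f); rewrite ?Hn ?Hf ?orbT.
  have Hr := leq_trans (subset_leq_card Hsub) (leq_card_setU _ _).
  have HU' : #|sg_vertices F'| <= #|U| - 1.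
    have : sg_vertices F' \subset U :\ u.
      apply/subsetP => v /vertP [f Hf Hv]; move: Hf => /setDP [Hf Huf]; rewrite inE in Huf.
      rewrite in_setD1; apply/andP; split; last by apply/vertP; exists f.
      by apply: contraNneq Huf => <-.
    by move/subset_leq_card; rewrite (cardsD1 u U) Hu add1n subn1.
  have HU2 : 1 < #|U| by apply: nonempty_vert => //; rewrite -Hcard ltn_addr.
  have HQ' : (Q F' <= INR #|F| * (2 * ln (INR #|F|) + ln (INR (#|U| - 1))))%R.
    apply: Rle_trans; first apply: (Phi_le (y := #|F|) (z := #|U| - 1)).
    - by rewrite -Hcard leq_addl.
    - exact: HU'.
    - by move=> H; have := nonempty_vert HF' H; move/(ltn_trans _)->.
    apply: Rmult_le_compat_r.
      have : (1 <= INR #|F|)%R by apply: INR_ge1; rewrite -Hcard ltn_addr.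
      have : (1 <= INR (#|U| - 1))%R by apply: INR_ge1; rewrite subn_gt0.
      move=> A B; have := ln_ge0 A; have := ln_ge0 B; lra.
    by apply: INR_leq; rewrite -Hcard leq_addl.
  have HM : (1 <= INR #|F|)%R by apply: INR_ge1; rewrite -Hcard ltn_addr.
  have HUu : (2 <= INR #|U|)%R by apply: (INR_leq HU2).
  have Hsub1 : INR (#|U| - 1) = (INR #|U| - 1)%R.
    by rewrite minus_INR //=; apply/leP; apply: ltnW.
  rewrite Hsub1 in HQ'.
  have Hdiff := ln_diff HUu.
  rewrite vol_U // Edeg INR_mul /= in Hdeg.
  have E2 : (1 + 1 = 2)%R by ring.
  rewrite E2 in Hdeg.
  have Hfin := removal_real (d := INR #|F :&: D|) (L := ln (INR #|F|)) Hal HM HUu (pos_INR _) Hdeg Hdiff HQ'.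
  have HK : (0 <= Kp al)%R.
    rewrite /Kp; apply: Rmult_le_pos; [lra|left; apply: Rinv_0_lt_compat; lra].
  apply: Rle_trans (_ : Kp al * (INR #|F' :\: bigU Ps| + INR #|F :&: D|) <= _)%R.
    by apply: Rmult_le_compat_l => //; rewrite -INR_add; apply: INR_leq.
  rewrite /Q /Phi -/U; lra.
have He : ~ is_expander al F by move=> He; apply: Hng.
have [S [HS Hc]] : exists S : {set V}, S \subset U /\
    (INR (sg_cut F S) < al * Rmin (INR (sg_vol F S)) (INR (sg_vol F (U :\: S))))%R.
  apply: NNPP => Hn; apply: He; rewrite /is_expander /= => S HS.
  apply: Rnot_lt_ge => Hl; apply: Hn; by exists S.
have HvS := vol_S HF S; have HvT := vol_T HF S; have Hm := card_F HF S.
rewrite cut_Cu HvS HvT in Hc.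
set F1' := F1 F S in Hc HvS HvT Hm *.
set F2' := F2 F S in Hc HvS HvT Hm *.
set C := Cu F S in Hc HvS HvT Hm *.
have Hal0 : (0 < al)%R by case: Hal.
have [Hx1 Hx2] := cut_pos Hal0 Hc.
have Hm1 : #|F1'| < #|F| by rewrite Hm; lia.
have Hm2 : #|F2'| < #|F| by rewrite Hm; lia.
have HF1 : F1' \subset edge_set e by apply: subset_trans HF; apply: F1_sub.
have HF2 : F2' \subset edge_set e by apply: subset_trans HF; apply: F2_sub.
have [Ps1 [H1a [H1b H1c]]] := IH F1' (leq_trans Hm1 HFk) HF1.
have [Ps2 [H2a [H2b H2c]]] := IH F2' (leq_trans Hm2 HFk) HF2.
exists (Ps1 ++ Ps2); split.
  move=> P; rewrite mem_cat => /orP [/H1a|/H2a] [HP Hg]; split => //; apply: subset_trans HP _.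
    exact: F1_sub.
  exact: F2_sub.
split.
  move=> v; rewrite count_cat; case: (boolP (v \in S)) => Hv.
    rewrite [count _ Ps2](eq_in_count (a2 := pred0)) ?count_pred0 ?addn0; first exact: H1b.
    move=> P HP /=; apply/negbTE.
    apply: contraL Hv => HvP.
    have [HP2 _] := H2a P HP.
    have := subsetP (subset_trans (vert_sub HP2) (vert_F2 F S)) v HvP.
    by rewrite in_setD => /andP [].
  rewrite [count _ Ps1](eq_in_count (a2 := pred0)) ?count_pred0 ?add0n; first exact: H2b.
  move=> P HP /=; apply/negbTE.
  apply: contra Hv => HvP.
  have [HP1 _] := H1a P HP.
  exact: subsetP (subset_trans (vert_sub HP1) (vert_F1 F S)) v HvP.
have Hsub : F :\: bigU (Ps1 ++ Ps2) \subset (F1' :\: bigU Ps1) :|: (F2' :\: bigU Ps2) :|: C.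
  rewrite /bigU big_cat /=.
  apply/subsetP => f /setDP [Hf]; rewrite in_setU negb_or => /andP [Hn1 Hn2].
  rewrite !in_setU !in_setD Hn1 Hn2 /= -orbA; exact: F_cases.
have Hr := leq_trans (subset_leq_card Hsub)
   (leq_trans (leq_card_setU _ _) (leq_add (leq_card_setU _ _) (leqnn _))).
have HK : (0 <= Kp al)%R.
  rewrite /Kp; apply: Rmult_le_pos; [lra|left; apply: Rinv_0_lt_compat; lra].
apply: Rle_trans (_ : Kp al * INR #|C| + (Q F1' + Q F2') <= _)%R.
  apply: Rle_trans (_ : Kp al * (INR #|F1' :\: bigU Ps1| + INR #|F2' :\: bigU Ps2| + INR #|C|) <= _)%R.
    by apply: Rmult_le_compat_l => //; rewrite -!INR_add; apply: INR_leq.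
  lra.
have HU1 : #|sg_vertices F1'| <= #|U|.
  by apply: subset_leq_card; apply: subset_trans (vert_F1 F S) HS.
have HU2 : #|sg_vertices F2'| <= #|U|.
  by apply: subset_leq_card; apply: subset_trans (vert_F2 F S) _; apply: subsetDl.
have HFpos : 0 < #|F| by apply: leq_ltn_trans Hm1.
have HLv : (0 <= 2 * ln (INR #|F|) + ln (INR #|U|))%R.
  have A := ln_ge0 (INR_ge1 HFpos).
  have B := ln_ge0 (INR_ge1 (ltnW (nonempty_vert HF HFpos))).
  rewrite -/U in B; lra.
have Hsum : (INR #|F1'| + INR #|F2'| <= INR #|F|)%R.
  by rewrite -INR_add; apply: INR_leq; rewrite Hm leq_addr.
have Hne1 : 0 < #|F1'| -> 0 < #|sg_vertices F1'|.
  by move=> H; have := nonempty_vert HF1 H; move/(ltn_trans _)->.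
have Hne2 : 0 < #|F2'| -> 0 < #|sg_vertices F2'|.
  by move=> H; have := nonempty_vert HF2 H; move/(ltn_trans _)->.
rewrite /Q /Phi -/U -/(Phi #|F1'| _) -/(Phi #|F2'| _).
case: (leqP (2 * #|F1'| + #|C|) (2 * #|F2'| + #|C|)) => Hle.
  rewrite Rmin_left in Hc; last by apply: INR_leq.
  rewrite INR_add INR_mul (_ : INR 2 = 2%R) // in Hc.
  have Q1 : (Phi #|F1'| #|sg_vertices F1'| <= INR #|F1'| * (2 * ln (INR #|F|) + ln (INR #|U|)) - INR #|F1'|)%R.
    apply: Phi_half => //; rewrite Hm; lia.
  have Q2 : (Phi #|F2'| #|sg_vertices F2'| <= INR #|F2'| * (2 * ln (INR #|F|) + ln (INR #|U|)))%R.
    apply: Phi_le => //; rewrite Hm; lia.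
  exact: (cut_real Hal (pos_INR _) Hc Hsum HLv (pos_INR _) (pos_INR _) Q1 Q2).
rewrite Rmin_right in Hc; last by apply: INR_leq; apply: ltnW.
rewrite INR_add INR_mul (_ : INR 2 = 2%R) // in Hc.
have Q1 : (Phi #|F1'| #|sg_vertices F1'| <= INR #|F1'| * (2 * ln (INR #|F|) + ln (INR #|U|)))%R.
  apply: Phi_le => //; rewrite Hm; lia.
have Q2 : (Phi #|F2'| #|sg_vertices F2'| <= INR #|F2'| * (2 * ln (INR #|F|) + ln (INR #|U|)) - INR #|F2'|)%R.
  apply: Phi_half => //; rewrite Hm; lia.
have Hsum' : (INR #|F2'| + INR #|F1'| <= INR #|F|)%R by lra.
have := cut_real Hal (pos_INR _) Hc Hsum' HLv (pos_INR _) (pos_INR _) Q2 Q1.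
lra.
Qed.

Lemma card_edges (F : {set {set V}}) : F \subset edge_set e -> #|F| <= #|V| * #|V|.
Proof.
move=> HF; apply: leq_trans (subset_leq_card HF) _.
have H : edge_set e \subset [set [set p.1; p.2] | p in [set: V * V]].
  apply/subsetP => f /imset2P [x y _ _ ->]; apply/imsetP; exists (x, y) => //.
apply: leq_trans (subset_leq_card H) _.
apply: leq_trans (leq_imset_card _ _) _.
by rewrite cardsT card_prod.
Qed.

Lemma lnn_gt (n : nat) : 2 <= n -> (/ 2 < ln (INR n))%R.
Proof.
move=> Hn; have := ln_lt_2; have := ln_le (x := 2%R) (y := INR n) ltac:(lra).
have : (2 <= INR n)%R by have := INR_leq Hn.
move=> A B; have := B A; lra.
Qed.

Lemma level2 : 2 <= #|V| -> forall F : {set {set V}}, F \subset edge_set e ->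
  exists Ps : seq {set {set V}},
  (forall P, P \in Ps -> P \subset F /\ good (/ 40 / ln (INR #|V|)) P) /\
  (forall v, count (fun P => v \in sg_vertices P) Ps <= 1) /\
  2 * #|F :\: bigU Ps| <= #|F|.
Proof.
move=> Hn F HF.
have HL := lnn_gt Hn.
have [Hal HK] := alpha_ok HL.
have [Ps [H1 [H2 H3]]] := level Hal HF.
exists Ps; split => //; split => //.
have HQ : (Q F <= INR #|F| * (2 * (ln (INR #|V|) + ln (INR #|V|)) + ln (INR #|V|)))%R.
  have HV : (0 < INR #|V|)%R by have := INR_leq Hn; rewrite (_ : INR 2 = 2%R) //; lra.
  rewrite -ln_mult // -INR_mul.
  apply: Phi_le; first exact: card_edges.
    exact: max_card.
  by move=> H; have := nonempty_vert HF H; move/(ltn_trans _)->.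
have := level_real HL HK H3 HQ (pos_INR _).
rewrite -[(2 * _)%R]/(INR 2 * _)%R -INR_mul => /INR_leq_inv //.
Qed.

Lemma bigU_has (Ps : seq {set {set V}}) (f : {set V}) : (f \in bigU Ps) = has (fun P : {set {set V}} => f \in P) Ps.
Proof.
rewrite /bigU; elim: Ps => [|P Ps IH]; first by rewrite big_nil inE.
by rewrite big_cons in_setU IH.
Qed.

Lemma multi : 2 <= #|V| -> forall p (F : {set {set V}}), F \subset edge_set e -> #|F| < expn 2 p ->
  exists Gs : seq {set {set V}},
  (forall P, P \in Gs -> P \subset F /\ good (/ 40 / ln (INR #|V|)) P) /\
  (forall f : {set V}, count (fun P : {set {set V}} => f \in P) Gs <= 1) /\
  bigU Gs = F /\
  (forall v, count (fun P => v \in sg_vertices P) Gs <= p).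
Proof.
move=> Hn; elim=> [|p IH] F HF HFp.
  exists [::]; split => //; split => //; split => //.
  rewrite /bigU big_nil; apply/esym/eqP; rewrite -cards_eq0 -leqn0; exact: HFp.
have [Ps [H1 [H2 H3]]] := level2 Hn HF.
set R := F :\: bigU Ps in H3.
have HR : R \subset edge_set e by apply: subset_trans HF; apply: subsetDl.
have HRp : #|R| < expn 2 p by move: HFp; rewrite expnS; lia.
have [Gs [G1 [G2 [G3 G4]]]] := IH R HR HRp.
have HPsF : bigU Ps \subset F.
  apply/subsetP => f; rewrite bigU_has => /hasP [P HP HfP].
  by have [/subsetP HPF _] := H1 P HP; apply: HPF.
exists (Ps ++ Gs); split.
  move=> P; rewrite mem_cat => /orP [/H1 //|/G1 [HP Hg]]; split => //.
  apply: subset_trans HP _; apply: subsetDl.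
split.
  move=> f; rewrite count_cat.
  case Hf: (f \in bigU Ps).
    have -> : count (fun P : {set {set V}} => f \in P) Gs = 0.
      apply/eqP; rewrite -leqn0 leqNgt -has_count; apply/hasP => [[P HP HfP]].
      have [/subsetP HPR _] := G1 P HP.
      by have := HPR f HfP; rewrite in_setD Hf.
    rewrite addn0.
    have HfF : f \in F by apply: (subsetP HPsF).
    have [x [y [nxy Ef]]] := edgeP (subsetP HF f HfF).
    apply: leq_trans (H2 x); apply: sub_count => P /= HfP.
    by apply/vertP; exists f => //; rewrite Ef !inE eqxx.
  have -> : count (fun P : {set {set V}} => f \in P) Ps = 0.
    by apply/eqP; rewrite -leqn0 leqNgt -has_count -bigU_has Hf.
  exact: G2.
split.
  rewrite /bigU big_cat /= -/(bigU Ps) -/(bigU Gs) G3 /R.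
  apply/setP => f; rewrite in_setU in_setD.
  case Hf: (f \in bigU Ps) => //=.
  by rewrite (subsetP HPsF).
by move=> v; rewrite count_cat -add1n; apply: leq_add.
Qed.

End G.

Lemma count_two (T : Type) (a : pred T) (s : seq T) x0 i j : count a s <= 1 ->
  i < size s -> j < size s -> i <> j -> a (nth x0 s i) -> a (nth x0 s j) -> False.
Proof.
elim: s i j => [|x s IH] [|i] [|j] //= Hc Hi Hj Hij Ha Hb.
- have : has a s by apply/(has_nthP x0); exists j.
  by rewrite has_count; move: Hc; rewrite Ha; lia.
- have : has a s by apply/(has_nthP x0); exists i.
  by rewrite has_count; move: Hc; rewrite Hb; lia.
- apply: (IH i j) => //; last by move=> E; apply: Hij; rewrite E.
  by apply: leq_trans Hc; apply: leq_addl.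
Qed.

Lemma INR_expn2 t : INR (expn 2 t) = (2 ^ t)%R.
Proof.
elim: t => [|t IH]; first by rewrite expn0.
by rewrite expnS INR_mul IH /=.
Qed.

Theorem mainTheorem5 :
  exists c : R, (0 < c)%R /\
  exists C : R, (0 < C)%R /\
  forall (V : finType) (e : rel V),
    symmetric e -> irreflexive e -> 2 <= #|V| ->
    let n := #|V| in
    let alpha := (c / ln (INR n))%R in
    exists Gs : seq {set {set V}},
      (* edge-disjoint decomposition of the edge set of G *)
      (forall i j, i < size Gs -> j < size Gs -> i <> j ->
         [disjoint nth set0 Gs i & nth set0 Gs j]) /\
      \bigcup_(F <- Gs) F = edge_set e /\
      (* (a) each vertex appears in at most C log^2 n subgraphs *)
      (forall v : V,
         (INR (count (fun F => v \in sg_vertices F) Gs) <= C * (ln (INR n)) ^ 2)%R) /\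
      (* (b) each subgraph is an alpha/4-weakly-regular alpha-expander *)
      (forall F, F \in Gs -> weakly_regular (alpha / 4) F /\ is_expander alpha F).
Proof.
exists (/ 40)%R; split; first lra.
exists 16%R; split; first lra.
move=> V e Hsym Hirr Hn n alpha.
set t := trunc_log 2 n.
have Hnt : n < expn 2 t.+1 by apply: trunc_log_ltn.
have Hlt : #|edge_set e| < expn 2 (t.+1 + t.+1).
  apply: leq_ltn_trans (card_edges (subxx _)) _.
  by rewrite expnD; apply: ltn_mul.
have [Gs [G1 [G2 [G3 G4]]]] := multi Hirr Hn (subxx _) Hlt.
exists Gs; split.
  move=> i j Hi Hj Hij; rewrite -setI_eq0; apply/eqP/setP => f.
  rewrite inE in_set0; apply/negP => /andP [Ha Hb].
  exact: (count_two (G2 f) Hi Hj Hij Ha Hb).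
split; first exact: G3.
split.
  move=> v; have := G4 v => /INR_leq Hc.
  apply: Rle_trans Hc _.
  have HL := lnn_gt Hn.
  have Ht : (INR t <= 2 * ln (INR n))%R.
    have H2t : expn 2 t <= n by apply: trunc_logP => //; apply: leq_trans Hn.
    have := ln_le (x := INR (expn 2 t)) (y := INR n) ltac:(rewrite INR_expn2; apply: pow_lt; lra) (INR_leq H2t).
    rewrite INR_expn2 ln_pow; last lra.
    have := ln_lt_2; have := pos_INR t; nra.
  rewrite INR_add !S_INR.
  rewrite -/n in HL.
  have H8 : (8 * ln (INR n) <= 16 * ln (INR n) ^ 2)%R by nra.
  lra.
move=> F HF; have [_ [Hw He]] := G1 F HF; split; [exact: Hw | exact: He].
Qed.
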